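(* Let $(X,\tau_1,\tau_2)$ be a bitopological space which is a $j$-$P$-space, $i,j\in\{1,2\}$, $i\ne j$. Let $\{U_\alpha:\alpha\in\Delta\}$ be a family of $(i,j)$-regular open sets and let $\{V_\lambda:\lambda\in\Lambda\}$ be a family of $i$-open sets which refines $\{U_\alpha\}$ and is $j$-locally countable. Then $\{i\text{-}\mathrm{int}(j\text{-}\mathrm{cl}(V_\lambda)):\lambda\in\Lambda\}$ is a family of $\tau^s_{(i,j)}$-open sets which refines $\{U_\alpha:\alpha\in\Delta\}$ and is locally countable with respect to $\tau^s_{(j,i)}$ (i.e. every point has a $\tau^s_{(j,i)}$-open neighbourhood meeting at most countably many of its members).
   Context: $(X,\tau_1,\tau_2)$ is a bitopological space and $i,j\in\{1,2\}$, $i\neq j$. For $k\in\{1,2\}$, $k\text{-}\mathrm{int}$, $k\text{-}\mathrm{cl}$ denote interior and closure with respect to $\tau_k$; ''$k$-open'' means $\tau_k$-open. A set $A$ is $(i,j)$-regular open if $A=i\text{-}\mathrm{int}(j\text{-}\mathrm{cl}(A))$. The pairwise semiregularization of $(X,\tau_1,\tau_2)$ is $(X,\tau^s_{(1,2)},\tau^s_{(2,1)})$, where $\tau^s_{(i,j)}$ is the topology on $X$ having as a base the family of all $(i,j)$-regular open sets of $(X,\tau_1,\tau_2)$. A family $\mathcal V$ refines $\mathcal U$ if each member of $\mathcal V$ is contained in some member of $\mathcal U$. A family $\mathcal V$ is $k$-locally countable if every $x\in X$ has a $k$-open neighbourhood meeting at most countably many members of $\mathcal V$. $X$ is a $k$-$P$-space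 if every intersection of countably many $k$-open sets is $k$-open. *)

(* Defs.v *)
Set Implicit Arguments.

Section BiTop.
Variable X : Type.

Definition subset (A B : X -> Prop) : Prop := forall x, A x -> B x.

Definition is_topology (T : (X -> Prop) -> Prop) : Prop :=
  T (fun _ => True) /\
  (forall F : (X -> Prop) -> Prop,
      (forall A, F A -> T A) -> T (fun x => exists A, F A /\ A x)) /\
  (forall A B, T A -> T B -> T (fun x => A x /\ B x)).

Definition interior (T : (X -> Prop) -> Prop) (A : X -> Prop) : X -> Prop :=
  fun x => exists U, T U /\ U x /\ subset U A.

Definition closure (T : (X -> Prop) -> Prop) (A : X -> Prop) : X -> Prop :=
  fun x => forall U, T U -> U x -> exists y, U y /\ A y.

Definition regular_open (Ti Tj : (X -> Prop) -> Prop) (A : X -> Prop) : Prop :=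
  forall x, A x <-> interior Ti (closure Tj A) x.

(* tau^s_(i,j): the topology having the (i,j)-regular open sets as a base,
   i.e. its open sets are the unions of (i,j)-regular open sets. *)
Definition semireg (Ti Tj : (X -> Prop) -> Prop) : (X -> Prop) -> Prop :=
  fun G => forall x, G x -> exists B, regular_open Ti Tj B /\ B x /\ subset B G.

Definition P_space (T : (X -> Prop) -> Prop) : Prop :=
  forall G : nat -> X -> Prop, (forall n, T (G n)) -> T (fun x => forall n, G n x).

Definition refines (Lam Del : Type) (V : Lam -> X -> Prop) (U : Del -> X -> Prop) : Prop :=
  forall l, exists a, subset (V l) (U a).

End BiTop.

Definition countable_set (I : Type) (S : I -> Prop) : Prop :=
  exists f : I -> nat, forall a b, S a -> S b -> f a = f b -> a = b.

Definition locally_countable (X Lam : Type) (T : (X -> Prop) -> Prop)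
  (V : Lam -> X -> Prop) : Prop :=
  forall x, exists W, T W /\ W x /\
    countable_set (fun l => exists y, W y /\ V l y).

(* Main.v *)
Require Import Defs.

Lemma reg_int_cl (X : Type) (T1 T2 : (X -> Prop) -> Prop) (A : X -> Prop) :
  T1 A -> regular_open T1 T2 (interior T1 (closure T2 A)).
Proof.
  intros HA x; split.
  - intros [O [HO [Ox HOs]]]. exists O; split; [exact HO|split; [exact Ox|]].
    intros y Oy Q HQ Qy. destruct (HOs y Oy Q HQ Qy) as [z [Qz Az]].
    exists z; split; [exact Qz|]. exists A; split; [exact HA|split; [exact Az|]].
    intros w Aw R _ Rw. exists w; split; assumption.
  - intros [O [HO [Ox HOs]]]. exists O; split; [exact HO|split; [exact Ox|]].
    intros y Oy Q HQ Qy. destruct (HOs y Oy Q HQ Qy) as [z [Qz Hz]].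
    destruct Hz as [O' [HO' [O'z HO's]]].
    exact (HO's z O'z Q HQ Qz).
Qed.

Lemma semireg_int_cl (X : Type) (T1 T2 : (X -> Prop) -> Prop) (A : X -> Prop) :
  T1 A -> semireg T1 T2 (interior T1 (closure T2 A)).
Proof.
  intros HA x Hx. exists (interior T1 (closure T2 A)).
  split; [apply reg_int_cl; exact HA|split; [exact Hx|]].
  intros y Hy; exact Hy.
Qed.

Theorem lemma2 (X : Type) (Ti Tj : (X -> Prop) -> Prop)
  (Delta Lambda : Type) (U : Delta -> X -> Prop) (V : Lambda -> X -> Prop) :
  is_topology Ti -> is_topology Tj ->
  P_space Tj ->
  (forall a, regular_open Ti Tj (U a)) ->
  (forall l, Ti (V l)) ->
  refines V U ->
  locally_countable Tj V ->
  (forall l, semireg Ti Tj (interior Ti (closure Tj (V l)))) /\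
  refines (fun l => interior Ti (closure Tj (V l))) U /\
  locally_countable (semireg Tj Ti) (fun l => interior Ti (closure Tj (V l))).
Proof.
  intros _ _ _ HU HV Href Hlc. split; [|split].
  - intros l; apply semireg_int_cl; apply HV.
  - intros l. destruct (Href l) as [a Ha]. exists a. intros x Hx.
    apply (proj2 (HU a x)).
    destruct Hx as [O [HO [Ox HOs]]]. exists O; split; [exact HO|split; [exact Ox|]].
    intros y Oy Q HQ Qy. destruct (HOs y Oy Q HQ Qy) as [z [Qz Vz]].
    exists z; split; [exact Qz|apply Ha; exact Vz].
  - intros x. destruct (Hlc x) as [W [HW [Wx [f Hf]]]].
    exists (interior Tj (closure Ti W)). split; [apply semireg_int_cl; exact HW|].
    split.
    + exists W; split; [exact HW|split; [exact Wx|]].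
      intros y Wy Q _ Qy. exists y; split; assumption.
    + exists f. intros a b Ha Hb Hab.
      assert (key : forall l, (exists y, interior Tj (closure Ti W) y /\
                      interior Ti (closure Tj (V l)) y) -> exists y, W y /\ V l y).
      { intros l [y [[G [HG [Gy HGs]]] [O [HO [Oy HOs]]]]].
        destruct (HGs y Gy O HO Oy) as [z [Oz Wz]].
        destruct (HOs z Oz W HW Wz) as [w [Ww Vw]].
        exists w; split; assumption. }
      apply Hf; [apply key; exact Ha|apply key; exact Hb|exact Hab].
Qed.
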